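(* Let $m\ge 3$, let $K\ne\Delta_{[m]}$ be a simplicial complex on $[m]$ with $\{m\}\in K$, and let $L=K\cap 2^{[m-1]}$, regarded as a simplicial complex on $[m-1]$, with $L\ne\Delta_{[m-1]}$. Then $K$ is the cone over $L$ with apex $m$ (i.e. $K=\{\sigma,\sigma\cup\{m\}:\sigma\in L\}$) if and only if $$\mathrm{Bier}(L)=\mathrm{Bier}(K)\cap 2^{[m-1]\sqcup[(m-1)']},$$ where $\mathrm{Bier}(L)$ is formed using the Alexander dual of $L$ on $[(m-1)']$.
   Context: A simplicial complex $K$ on $[m]=\{1,\dots,m\}$ is a nonempty family of subsets of $[m]$ closed under taking subsets. $\Delta_{[n]}=2^{[n]}$. Let $[n']=\{1',\dots,n'\}$ be a disjoint copy of $[n]$, $I'=\{i':i\in I\}$. For a complex $K\ne\Delta_{[n]}$ on $[n]$ the Alexander dual $K^\vee$ is the complex on $[n']$ with $J'\in K^\vee$ iff $[n]\setminus J\notin K$. The Bier sphere $\mathrm{Bier}(K)$ is the complex on $[n]\sqcup[n']$ with faces $I\sqcup J'$, $I\in K$, $J'\in K^\vee$, $I\cap J=\varnothing$. *)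

(* Defs.v *)
(* Vertices of [m] are the ordinals of 'I_m (vertex k+1 <-> ordinal k);
   the disjoint copy [m'] is realised via the sum type T + T: inl i = i, inr i = i'. *)
From mathcomp Require Import all_boot.
Set Implicit Arguments. Unset Strict Implicit. Unset Printing Implicit Defensive.

Section Complexes.
Variable T : finType.

Definition is_complex (V : {set T}) (K : {set {set T}}) : Prop :=
  K != set0 /\ (forall s : {set T}, s \in K -> s \subset V) /\
  (forall s t : {set T}, s \in K -> t \subset s -> t \in K).

Definition full_simplex (V : {set T}) : {set {set T}} := powerset V.

Definition alex_dual (V : {set T}) (K : {set {set T}}) : {set {set T}} :=
  [set J in powerset V | V :\: J \notin K].

Definition bier (V : {set T}) (K : {set {set T}}) : {set {set (T + T)}} :=
  [set (inl @: I) :|: (inr @: J) | I : {set T} in K, J : {set T} in alex_dual V K & [disjoint I & J]].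

Definition restrict2 (W : {set T}) (B : {set {set (T + T)}}) : {set {set (T + T)}} :=
  [set S in B | S \subset (inl @: W) :|: (inr @: W)].

Definition restrict (W : {set T}) (K : {set {set T}}) : {set {set T}} :=
  [set s in K | s \subset W].

Definition cone (a : T) (L : {set {set T}}) : {set {set T}} :=
  L :|: [set s :|: [set a] | s in L].

End Complexes.

(* Main.v *)
Require Import Defs.
From mathcomp Require Import all_boot.
Set Implicit Arguments. Unset Strict Implicit. Unset Printing Implicit Defensive.

Section Gen.
Variable T : finType.
Variable a : T.
Variable K : {set {set T}}.
Let W := [set i : T | i != a].
Let L := restrict W K.
Hypothesis Kne : K != set0.
Hypothesis Kcl : forall s t : {set T}, s \in K -> t \subset s -> t \in K.

Definition Cc := forall s, s \in K -> s \subset W -> s :|: [set a] \in K.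

Lemma set0K : set0 \in K.
Proof. case/set0Pn: Kne => s Hs. exact: Kcl Hs (sub0set _). Qed.

Lemma split_l (I J : {set T}) : [set x | inl x \in (inl @: I :|: inr @: J : {set T + T})] = I.
Proof.
apply/setP => x; rewrite !inE (mem_imset _ _ (@inl_inj T T)).
case: (x \in I) => //=; apply/imsetP => [[y _ ]] //.
Qed.

Lemma split_r (I J : {set T}) : [set x | inr x \in (inl @: I :|: inr @: J : {set T + T})] = J.
Proof.
apply/setP => x; rewrite !inE (mem_imset _ _ (@inr_inj T T)) orbC.
case: (x \in J) => //=; apply/imsetP => [[y _ ]] //.
Qed.

Lemma bier_mem V (M : {set {set T}}) S :
  (S \in bier V M) <-> exists (I J : {set T}), [/\ S = inl @: I :|: inr @: J, I \in M,
     J \in alex_dual V M & [disjoint I & J]].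
Proof.
split.
- case/imset2P => I J HI; rewrite inE => /andP [HJ Hd] ->.
  by exists I, J.
- case => I [J [-> HI HJ Hd]]; apply/imset2P; exists I J => //; by rewrite inE HJ.
Qed.

Lemma sub_split (I J : {set T}) :
  ((inl @: I :|: inr @: J : {set T + T}) \subset inl @: W :|: inr @: W) =
  (I \subset W) && (J \subset W).
Proof.
apply/idP/andP.
- move=> H; split; apply/subsetP => x Hx.
  + have : inl x \in inl @: W :|: inr @: W.
      by apply: (subsetP H); rewrite inE imset_f.
    by move: (split_l W W) => /setP /(_ x); rewrite inE => <-.
  + have : inr x \in inl @: W :|: inr @: W.
      by apply: (subsetP H); rewrite inE orbC imset_f.
    by move: (split_r W W) => /setP /(_ x); rewrite inE => <-.
- by case=> H1 H2; apply: setUSS; apply: imsetS.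
Qed.

Lemma VJ (J : {set T}) : J \subset W -> [set: T] :\: J = (W :\: J) :|: [set a].
Proof.
move=> HJ; apply/setP => x; rewrite !inE.
case: (x =P a) => [->|_] /=; last by rewrite andbT orbF.
rewrite orbT andbT; apply/negP => Ha; move: (subsetP HJ _ Ha); rewrite inE eqxx. done.
Qed.

Lemma part2 : bier W L = restrict2 W (bier [set: T] K) <-> Cc.
Proof.
split.
- move=> E s Hs HsW; apply/negPn/negP => Hn.
  pose J := W :\: s.
  have HJW : J \subset W by apply: subsetDl.
  have HS : (inl @: set0 :|: inr @: J) \in restrict2 W (bier [set: T] K).
    rewrite inE sub_split sub0set HJW !andbT; apply (proj2 (bier_mem _ _ _)).
    exists set0, J; split => //; first exact: set0K.
      rewrite inE powersetE subsetT /= VJ //.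
      by rewrite (_ : W :\: J = s) // setDDr setDv set0U; apply/setIidPr.
    by rewrite -setI_eq0 set0I.
  rewrite -E in HS; move: HS => /(bier_mem _ _ _) [I' [J' [Heq _ HJ' _]]].
  have eJ : J' = J by rewrite -(split_r I' J') -Heq split_r.
  move: HJ'; rewrite eJ inE => /andP [_].
  rewrite (_ : W :\: J = s); first by rewrite inE Hs HsW.
  by rewrite setDDr setDv set0U; apply/setIidPr.
- move=> C; apply/setP => S; apply/idP/idP.
  + move/(bier_mem _ _ _) => [I [J [-> HI HJ Hd]]].
    move: HI; rewrite inE => /andP [HIK HIW].
    move: HJ; rewrite inE => /andP [HJW HnL]; rewrite powersetE in HJW.
    rewrite inE sub_split HIW HJW !andbT; apply (proj2 (bier_mem _ _ _)); exists I, J; split => //.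
    rewrite inE powersetE subsetT /=; apply/negP => HV.
    move/negP: HnL; apply; rewrite inE subsetDl andbT.
    by apply: Kcl HV _; apply: setSD; apply: subsetT.
  + rewrite inE => /andP [HB]; move: HB => /(bier_mem _ _ _) [I [J [-> HI HJ Hd]]].
    rewrite sub_split => /andP [HIW HJW].
    apply (proj2 (bier_mem _ _ _)); exists I, J; split => //; first by rewrite inE HI HIW.
    rewrite inE powersetE HJW /=; move: HJ; rewrite inE => /andP [_].
    rewrite VJ // => Hn; apply/negP; rewrite inE => /andP [H1 H2].
    by move/negP: Hn; apply; apply: C.
Qed.

Lemma part1 : K = cone a L <-> Cc.
Proof.
split.
- move=> E s Hs HsW; rewrite E inE; apply/orP; right; apply/imsetP; exists s => //.
  by rewrite inE Hs HsW.
- move=> C; apply/setP => s; apply/idP/idP => Hs.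
  + rewrite inE; case: (boolP (a \in s)) => Ha.
    * apply/orP; right; apply/imsetP; exists (s :\ a).
        rewrite inE; apply/andP; split; first by apply: Kcl Hs (subD1set _ _).
        by apply/subsetP => x; rewrite !inE => /andP [].
      by rewrite setUC setD1K.
    * apply/orP; left; rewrite inE Hs /=; apply/subsetP => x Hx; rewrite inE.
    by apply/negP => /eqP Ex; rewrite -Ex Hx in Ha.
  + move: Hs; rewrite inE => /orP [| /imsetP [t Ht ->]].
    * by rewrite inE => /andP [].
    * by move: Ht; rewrite inE => /andP [Ht HtW]; apply: C.
Qed.

End Gen.

Theorem mainTheorem6 (n : nat) (K : {set {set 'I_n.+1}}) :
  2 <= n ->
  is_complex [set: 'I_n.+1] K ->
  K != full_simplex [set: 'I_n.+1] ->
  [set ord_max] \in K ->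
  restrict [set i : 'I_n.+1 | i != ord_max] K
    != full_simplex [set i : 'I_n.+1 | i != ord_max] ->
  (K = cone ord_max (restrict [set i : 'I_n.+1 | i != ord_max] K) <->
   bier [set i : 'I_n.+1 | i != ord_max] (restrict [set i : 'I_n.+1 | i != ord_max] K)
   = restrict2 [set i : 'I_n.+1 | i != ord_max] (bier [set: 'I_n.+1] K)).
Proof.
move=> _ [Kne [_ Kcl]] _ _ _.
split => H.
- by apply (proj2 (part2 ord_max Kne Kcl)); apply (proj1 (part1 ord_max Kcl)).
- by apply (proj2 (part1 ord_max Kcl)); apply (proj1 (part2 ord_max Kne Kcl)).
Qed.
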